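(* Let $f:\{0,1\}^n\to\mathbb{C}$ have affine support of dimension $r$ with free variables $x_1,\dots,x_r$, where on $\mathrm{supp}(f)$ each variable satisfies $x_i\equiv\sum_{j=1}^r a_{ij}x_j+b_i \pmod 2$ ($1\le i\le n$), with $a_{ij},b_i\in\{0,1\}$, $(a_{ij})_{1\le i,j\le r}=I_r$ and $b_1=\dots=b_r=0$. Suppose \[f=\lambda\cdot\chi_{\mathrm{supp}(f)}\cdot\alpha^{L(x)+2Q(x)+4H(x)},\] where $\lambda\ne0$, $\alpha=e^{\pi i/4}$, $L(x)=\sum_{j=1}^r c_jx_j$, $Q(x)=\sum_{1\le j<k\le r}c_{jk}x_jx_k$, and $H(x)=\sum_{S\subseteq[r],|S|\ge3}c_S\prod_{j\in S}x_j$, all $c$'s integers. Then $f\in\mathscr{L}$ if and only if $H$ is homogeneous of degree 3 (i.e. $c_S\equiv0\pmod 2$ whenever $|S|\ge 4$) and the following congruences hold over $\mathbb{Z}_2$: \[\sum_{i=1}^n\prod_{j\in S}a_{ij}\equiv0 \quad\text{for all } S\subseteq[r] \text{ with } 1\le|S|\le4,\] \[\sum_{i=1}^n\Big(\prod_{j\in S}a_{ij}\Big)b_i\equiv c_S \quad\text{for all } S\subseteq[r] \text{ with } 1\le|S|\le3,\] where $c_{\{j\}}=c_j$, $c_{\{j,k\}}=c_{jk}$, $c_{\{j,k,\ell\}}=c_{jk\ell}$.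
   Context: $\chi_{\mathrm{supp}(f)}$ is the 0-1 indicator of $\mathrm{supp}(f)=\{x:f(x)\ne0\}$. In the exponent of $\alpha$ the variables $x_j\in\{0,1\}$ are integers and the expression is evaluated in $\mathbb{Z}$ (equivalently mod 8); the coefficients $c_j$ (mod 8), $c_{jk}$ (mod 4), $c_S$ for $|S|\ge3$ (mod 2) are uniquely determined by $f$. The class $\mathscr{A}$: $g\in\mathscr{A}$ iff $\mathrm{supp}(g)$ is an affine subspace of $\mathbb{Z}_2^n$ and, for free variables $x_1,\dots,x_r$ of it, $g=\mu\, i^{L'(x_1,\dots,x_r)+2Q'(x_1,\dots,x_r)}$ on the support, with $\mu\neq0$, $L'$ linear with integer coefficients, $Q'$ multilinear with integer coefficients and all monomials of degree 2 (or $g\equiv0$). $f$ of arity $n$ belongs to $\mathscr{L}$ iff for every $\sigma=s_1\cdots s_n\in\mathrm{supp}(f)$ the function $x\mapsto\alpha^{\sum_i s_ix_i}f(x)$ (integer sum) belongs to $\mathscr{A}$. *)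

(* Defs.v *)
From mathcomp Require Import all_boot all_order all_algebra all_field.
Set Implicit Arguments. Unset Strict Implicit. Unset Printing Implicit Defensive.
Import Order.TTheory GRing.Theory Num.Theory.
Local Open Scope ring_scope.

Definition bvec (n : nat) := {ffun 'I_n -> bool}.

Definition b2i (b : bool) : int := (b : nat)%:Z.

(* alpha = e^{pi i/4} = (1+i)/sqrt 2. *)
Definition alpha : algC := (1 + 'i) / sqrtC 2.

Definition xsum {I : finType} (P : pred I) (F : I -> bool) : bool :=
  \big[addb/false]_(j | P j) F j.

Definition affine_free {n : nat} (P : bvec n -> bool) (F : {set 'I_n})
    (A : 'I_n -> 'I_n -> bool) (B : 'I_n -> bool) : Prop :=
  [/\ (forall i j, i \in F -> j \in F -> A i j = (i == j)),
      (forall i, i \in F -> B i = false) &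
      (forall x, P x <->
         (forall i, x i = xsum (mem F) (fun j => A i j && x j) (+) B i))].

Definition classA {n : nat} (g : bvec n -> algC) : Prop :=
  (forall x, g x = 0) \/
  exists (F : {set 'I_n}) (A : 'I_n -> 'I_n -> bool) (B : 'I_n -> bool),
    affine_free (fun x => g x != 0) F A B /\
    exists (mu : algC) (l : 'I_n -> int) (q : 'I_n -> 'I_n -> int),
      mu != 0 /\
      forall x, g x != 0 ->
        g x = mu * 'i ^ (\sum_(j in F) l j * b2i (x j)
                        + 2 * \sum_(j in F) \sum_(k in F | (j < k)%N)
                                 q j k * b2i (x j) * b2i (x k)).

Definition classL {n : nat} (f : bvec n -> algC) : Prop :=
  forall s : bvec n, f s != 0 ->
    classA (fun x => alpha ^ (\sum_(i < n) b2i (s i) * b2i (x i)) * f x).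

Definition in_aff {n r : nat} (hr : (r <= n)%N) (a : 'I_n -> 'I_r -> bool)
    (b : 'I_n -> bool) (x : bvec n) : bool :=
  [forall i, x i == xsum predT (fun j => a i j && x (widen_ord hr j)) (+) b i].

Definition freevals {n r : nat} (hr : (r <= n)%N) (x : bvec n) : 'I_r -> int :=
  fun j => b2i (x (widen_ord hr j)).

Definition Lpoly {r : nat} (c1 : 'I_r -> int) (y : 'I_r -> int) : int :=
  \sum_(j < r) c1 j * y j.
Definition Qpoly {r : nat} (c2 : 'I_r -> 'I_r -> int) (y : 'I_r -> int) : int :=
  \sum_(j < r) \sum_(k < r | (j < k)%N) c2 j k * y j * y k.
Definition Hpoly {r : nat} (cS : {set 'I_r} -> int) (y : 'I_r -> int) : int :=
  \sum_(S : {set 'I_r} | (3 <= #|S|)%N) cS S * \prod_(j in S) y j.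

(* Main.v *)
Require Import Defs.
From mathcomp Require Import all_boot all_order all_algebra all_field.
From mathcomp Require Import zify ring lra.
From Stdlib Require Import FunctionalExtensionality.
Set Implicit Arguments. Unset Strict Implicit. Unset Printing Implicit Defensive.
Import Order.TTheory GRing.Theory Num.Theory.
Local Open Scope ring_scope.

Lemma two_neq0 : (2 : algC) != 0.
Proof. by rewrite pnatr_eq0. Qed.

Lemma alpha2 : alpha ^+ 2 = 'i.
Proof.
rewrite /alpha expr_div_n sqrtCK sqrrD sqrCi expr1n mul1r.
have -> : 1 + 'i *+ 2 - 1 = 'i * 2 :> algC by rewrite addrC addKr mulr_natr.
by rewrite mulfK // two_neq0.
Qed.

Lemma alpha_neq0 : alpha != 0.
Proof. apply/eqP => h; have := alpha2; rewrite h expr0n /= => /eqP; by rewrite eq_sym (negbTE (neq0Ci _)). Qed.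

Lemma N1_neq1 : (-1 : algC) != 1.
Proof.
rewrite eq_sym -subr_eq0 opprK; apply/negP => /eqP h.
by have := two_neq0; rewrite -h eqxx.
Qed.

Lemma i_neq1 : ('i : algC) != 1.
Proof.
apply/eqP=> h; have := sqrCi algC; rewrite h expr1n => h1.
by move: N1_neq1; rewrite -h1 eqxx.
Qed.

Lemma i_neqN1 : ('i : algC) != -1.
Proof.
apply/eqP=> h; have := sqrCi algC; rewrite h sqrrN expr1n => h1.
by move: N1_neq1; rewrite -h1 eqxx.
Qed.

Lemma alpha4 : alpha ^+ 4 = -1.
Proof. by rewrite (exprM alpha 2 2) alpha2 sqrCi. Qed.

Lemma alpha8 : alpha ^+ 8 = 1.
Proof. by rewrite (exprM alpha 4 2) alpha4 sqrrN expr1n. Qed.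

Lemma alphaz8 (k : int) : alpha ^ (8 * k) = 1.
Proof.
have h8 : alpha ^ (8 : int) = 1.
  have -> : (8 : int) = Posz 8 by [].
  exact: alpha8.
by rewrite -exprz_exp h8 exp1rz.
Qed.

Lemma alpha_pow_small (m : nat) : (m < 8)%N -> alpha ^+ m = 1 -> m = 0%N.
Proof.
have a3 : alpha ^+ 3 = alpha * 'i by rewrite exprS alpha2.
have ha1 : alpha != 1.
  by apply/eqP=> h; move: i_neq1; rewrite -alpha2 h expr1n eqxx.
have hi3 : 'i ^+ 3 = - ('i : algC) by rewrite exprS sqrCi mulrN1.
case: m => [//|[|[|[|[|[|[|[|//]]]]]]]] _ h.
- by move: ha1; rewrite -h expr1 eqxx.
- by move: i_neq1; rewrite -alpha2 h eqxx.
- have : 'i ^+ 3 = 1 :> algC by rewrite -alpha2 -exprM mulnC exprM h expr1n.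
  by rewrite hi3 => /eqP; rewrite eqr_oppLR => /eqP hh; move: i_neqN1; rewrite hh eqxx.
- by move: N1_neq1; rewrite -alpha4 h eqxx.
- have : 'i ^+ 5 = 1 :> algC by rewrite -alpha2 -exprM mulnC exprM h expr1n.
  rewrite (exprD _ 4 1) (exprM _ 2 2) sqrCi sqrrN !expr1n mul1r expr1 => hh.
  by move: i_neq1; rewrite hh eqxx.
- have : 'i ^+ 3 = 1 :> algC by rewrite -alpha2 -exprM h.
  by rewrite hi3 => /eqP; rewrite eqr_oppLR => /eqP hh; move: i_neqN1; rewrite hh eqxx.
- have : 'i ^+ 7 = 1 :> algC by rewrite -alpha2 -exprM mulnC exprM h expr1n.
  rewrite (exprD _ 4 3) (exprM _ 2 2) sqrCi sqrrN !expr1n mul1r hi3 => /eqP.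
  by rewrite eqr_oppLR => /eqP hh; move: i_neqN1; rewrite hh eqxx.
Qed.

Lemma alpha_eq1 (k : int) : alpha ^ k = 1 -> (8 %| k)%Z.
Proof.
rewrite {1}(divz_eq k 8) expfzDr ?alpha_neq0 // (mulrC (k %/ 8)%Z) alphaz8 mul1r => h.
have h0 : (0 <= k %% 8)%Z by rewrite modz_ge0.
have h8 : (k %% 8 < 8)%Z by rewrite ltz_pmod.
set m := `|(k %% 8)%Z|%N.
have hm : (k %% 8)%Z = m%:Z by rewrite /m gez0_abs.
rewrite hm in h h8.
have m0 : m = 0%N by apply: alpha_pow_small; [rewrite -ltz_nat | exact: h].
by apply/dvdz_mod0P; rewrite hm m0.
Qed.

Lemma bin2_double (m : nat) : (2 * 'C(m,2) = m * m.-1)%N.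
Proof.
elim: m => [//|m IH]; rewrite binS bin1 mulnDr IH; case: m {IH} => //= m; lia.
Qed.

Lemma par_step (m : nat) : (8 %| 2 * (2 * m%:Z - m%:Z * m%:Z - (odd m)%:Z))%Z.
Proof.
rewrite -[m]odd_double_half; case: (odd m) => /=; rewrite -/(odd _) ?odd_double /=;
set h := m./2; rewrite -addnn; nia.
Qed.

Lemma par_mod8 (m : nat) :
  (8 %| (odd m)%:Z - (m%:Z - 2 * ('C(m,2))%:Z + 4 * ('C(m,3))%:Z))%Z.
Proof.
elim: m => [//|m IH].
have h2 := bin2_double m; have hs := par_step m.
rewrite !binS bin1 oddS.
case: m IH h2 hs => [//|m] IH h2 hs. 
rewrite /= in h2 *.
have hq : (m.+1 * m.+1 = m.+1 * m + m.+1)%N by rewrite mulnS addnC.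
rewrite -PoszM hq in hs; move: (m.+1 * m)%N h2 hs => P h2 hs.
rewrite /= in IH hs; case: (odd m) IH hs => /= IH hs; lia.
Qed.

Lemma dvdz_sum (d : int) (I : finType) (P : pred I) (F : I -> int) :
  (forall i, P i -> (d %| F i)%Z) -> (d %| \sum_(i | P i) F i)%Z.
Proof. by move=> h; apply: rpred_sum. Qed.

Lemma b2i_sq (c : bool) : b2i c * b2i c = b2i c.
Proof. by case: c. Qed.

Lemma b2i_and (c d : bool) : b2i (c && d) = b2i c * b2i d.
Proof. by case: c; case: d. Qed.

Lemma sum_b2i (I : finType) (P : pred I) (B : pred I) :
  \sum_(i | P i) b2i (B i) = (#|[set i | P i && B i]|)%:Z.
Proof.
rewrite -sum1_card (big_morph Posz PoszD (erefl _)) big_mkcond /= [RHS]big_mkcond /=.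
apply: eq_bigr => i _; rewrite inE; case: (P i); case: (B i) => //.
Qed.

Lemma sum_sq_split (r : nat) (z : 'I_r -> int) :
  (forall j, z j * z j = z j) ->
  (\sum_(j < r) z j) * (\sum_(j < r) z j) = \sum_(j < r) z j + 2 * \sum_(j < r) \sum_(k < r | (j < k)%N) z j * z k.
Proof.
move=> hz.
rewrite mulr_suml.
have e : forall j : 'I_r, z j * \sum_(k < r) z k =
   z j + \sum_(k < r | (j < k)%N) z j * z k + \sum_(k < r | (k < j)%N) z j * z k.
  move=> j; rewrite mulr_sumr (bigD1 j) //= hz -addrA; congr (_ + _).
  rewrite (bigID (fun k : 'I_r => (j < k)%N)) /=; congr (_ + _).
    apply: eq_bigl => k; have -> : (k != j) = (nat_of_ord k != nat_of_ord j) by [].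
    lia.
  apply: eq_bigl => k; have -> : (k != j) = (nat_of_ord k != nat_of_ord j) by [].
  lia.
rewrite (eq_bigr _ (fun j _ => e j)) !big_split /=.
have -> : \sum_(i < r) \sum_(k < r | (k < i)%N) z i * z k =
          \sum_(j < r) \sum_(k < r | (j < k)%N) z j * z k.
  rewrite (exchange_big_dep predT) //=.
  by apply: eq_bigr => j _; apply: eq_bigr => k _; rewrite mulrC.
ring.
Qed.

Section Main.
Variables (n r : nat) (hr : (r <= n)%N) (a : 'I_n -> 'I_r -> bool) (b : 'I_n -> bool).
Implicit Types (i : 'I_n) (Z S T : {set 'I_r}).

Definition xv (Z : {set 'I_r}) : bvec n :=
  [ffun i => (\big[addb/false]_(j in Z) a i j) (+) b i].
Definition As i : {set 'I_r} := [set j | a i j].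
Definition yv (Z : {set 'I_r}) : 'I_r -> int := fun j => b2i (j \in Z).
Definition ind (S Z : {set 'I_r}) : int := b2i (S \subset Z).
Definition bt i Z : int := b2i (xv Z i).

Lemma xsum_odd i Z : \big[addb/false]_(j in Z) a i j = odd #|As i :&: Z|.
Proof.
rewrite -sum1_card (big_morph odd oddD (erefl (odd 0))) /=.
rewrite big_mkcond [RHS]big_mkcond /=; apply: eq_bigr => j _.
by rewrite !inE andbC; case: (j \in Z); case: (a i j).
Qed.

Definition zz i Z j : int := b2i (a i j) * yv Z j.
Definition Pp i Z : int := \sum_(j < r) \sum_(k < r | (j < k)%N) zz i Z j * zz i Z k.
Definition T3 i Z : int :=
  \sum_(S : {set 'I_r} | #|S| == 3%N) b2i (S \subset As i) * ind S Z.
Definition approx i Z : int :=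
  b2i (b i) + (1 - 2 * b2i (b i)) * (\sum_(j < r) zz i Z j - 2 * Pp i Z + 4 * T3 i Z).

Lemma m_sum i Z : (#|As i :&: Z|)%:Z = \sum_(j < r) zz i Z j.
Proof.
rewrite /zz /yv (eq_bigr (fun j => b2i (a i j && (j \in Z)))); last first.
  by move=> j _; rewrite b2i_and.
rewrite sum_b2i; congr Posz; apply: eq_card => j; by rewrite !inE.
Qed.

Lemma C3_sum i Z : ('C(#|As i :&: Z|, 3))%:Z = T3 i Z.
Proof.
rewrite -cards_draws /T3 /ind (eq_bigr (fun S => b2i (S \subset As i :&: Z))); last first.
  by move=> S _; rewrite subsetI b2i_and.
rewrite sum_b2i; congr Posz; apply: eq_card => S; by rewrite !inE andbC.
Qed.

Lemma prod_yv S Z : \prod_(j in S) yv Z j = ind S Z.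
Proof.
rewrite /ind /yv; case: (boolP (S \subset Z)) => h.
  by rewrite big1 // => j jS; rewrite (subsetP h j jS).
have [j jS jZ] := subsetPn h.
by rewrite (bigD1 j) //= (negbTE jZ) mul0r.
Qed.

Lemma bt_approx i Z : (8 %| bt i Z - approx i Z)%Z.
Proof.
have hm := m_sum i Z; have h3 := C3_sum i Z.
have hsq' : (\sum_(j < r) zz i Z j) * (\sum_(j < r) zz i Z j) =
            \sum_(j < r) zz i Z j + 2 * Pp i Z.
  by apply: sum_sq_split => j; rewrite /zz /yv; case: (a i j); case: (j \in Z).
have h2 := bin2_double #|As i :&: Z|.
have hp := par_mod8 #|As i :&: Z|.
rewrite /bt /approx /xv ffunE xsum_odd.
move: hp h2 hsq'; rewrite -hm -h3.
move: #|As i :&: Z| => m hp h2 hsq.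
have h2' : (2 * ('C(m,2))%:Z = m%:Z * m%:Z - m%:Z).
  rewrite -PoszM; case: m {hp hsq} h2 => //= m; lia.
case: (b i) => /=; case: (odd m) hp => /= hp; rewrite /b2i /=; lia.
Qed.

Variables (c1 : 'I_r -> int) (c2 : 'I_r -> 'I_r -> int) (cS : {set 'I_r} -> int).

Definition E (s : 'I_n -> bool) Z : int :=
  \sum_(i < n) b2i (s i) * bt i Z + Lpoly c1 (yv Z) + 2 * Qpoly c2 (yv Z)
  + 4 * Hpoly cS (yv Z).

Definition cb (s : 'I_n -> bool) i : int := b2i (s i) * (1 - 2 * b2i (b i)).
Definition K0 (s : 'I_n -> bool) : int := \sum_(i < n) b2i (s i) * b2i (b i).
Definition Ua (s : 'I_n -> bool) (j : 'I_r) : int := \sum_(i < n) cb s i * b2i (a i j).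
Definition Va (s : 'I_n -> bool) (j k : 'I_r) : int :=
  \sum_(i < n) cb s i * (b2i (a i j) * b2i (a i k)).
Definition Wa (s : 'I_n -> bool) S : int :=
  if #|S| == 3%N then \sum_(i < n) cb s i * b2i (S \subset As i) else 0.
Definition cH S : int := if (3 <= #|S|)%N then cS S else 0.

Definition U s j := Ua s j + c1 j.
Definition V s j k := c2 j k - Va s j k.
Definition W s S := Wa s S + cH S.

Definition main (s : 'I_n -> bool) Z : int :=
  K0 s + \sum_(j < r) U s j * yv Z j
  + 2 * (\sum_(j < r) \sum_(k < r | (j < k)%N) V s j k * (yv Z j * yv Z k))
  + 4 * \sum_S W s S * ind S Z.

Lemma main_eq s Z :
  main s Z = \sum_(i < n) b2i (s i) * approx i Z + Lpoly c1 (yv Z)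
             + 2 * Qpoly c2 (yv Z) + 4 * Hpoly cS (yv Z).
Proof.
have e1 : \sum_(i < n) b2i (s i) * approx i Z =
   K0 s + \sum_(i < n) cb s i * \sum_(j < r) zz i Z j
   - 2 * \sum_(i < n) cb s i * Pp i Z + 4 * \sum_(i < n) cb s i * T3 i Z.
  rewrite (eq_bigr (fun i => b2i (s i) * b2i (b i) + cb s i * \sum_(j < r) zz i Z j
        - 2 * (cb s i * Pp i Z) + 4 * (cb s i * T3 i Z))); last first.
    by move=> i _; rewrite /approx /cb; ring.
  by rewrite !big_split /= sumrN -!mulr_sumr.
have e2 : \sum_(i < n) cb s i * \sum_(j < r) zz i Z j = \sum_(j < r) Ua s j * yv Z j.
  rewrite (eq_bigr (fun i => \sum_(j < r) cb s i * b2i (a i j) * yv Z j)); last first.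
    by move=> i _; rewrite mulr_sumr; apply: eq_bigr => j _; rewrite /zz mulrA.
  rewrite exchange_big /=; apply: eq_bigr => j _; by rewrite /Ua mulr_suml.
have e3 : \sum_(i < n) cb s i * Pp i Z =
    \sum_(j < r) \sum_(k < r | (j < k)%N) Va s j k * (yv Z j * yv Z k).
  rewrite (eq_bigr (fun i => \sum_(j < r) \sum_(k < r | (j < k)%N)
       cb s i * (b2i (a i j) * b2i (a i k)) * (yv Z j * yv Z k))); last first.
    move=> i _; rewrite /Pp mulr_sumr; apply: eq_bigr => j _; rewrite mulr_sumr.
    by apply: eq_bigr => k _; rewrite /zz; ring.
  rewrite exchange_big /=; apply: eq_bigr => j _.
  rewrite exchange_big /=; apply: eq_bigr => k _.
  by rewrite /Va mulr_suml.
have e4 : \sum_(i < n) cb s i * T3 i Z = \sum_S Wa s S * ind S Z.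
  rewrite (eq_bigr (fun i => \sum_(S : {set 'I_r} | #|S| == 3%N)
       cb s i * b2i (S \subset As i) * ind S Z)); last first.
    by move=> i _; rewrite /T3 mulr_sumr; apply: eq_bigr => S _; rewrite mulrA.
  rewrite exchange_big /= big_mkcond /=; apply: eq_bigr => S _.
  by rewrite /Wa; case: (#|S| == 3%N) => //; rewrite mulr_suml.
have eH : Hpoly cS (yv Z) = \sum_S cH S * ind S Z.
  rewrite /Hpoly big_mkcond /=; apply: eq_bigr => S _.
  by rewrite /cH prod_yv; case: (3 <= #|S|)%N => //; rewrite mul0r.
have eU : \sum_(j < r) U s j * yv Z j = \sum_(j < r) Ua s j * yv Z j + Lpoly c1 (yv Z).
  by rewrite /Lpoly -big_split /=; apply: eq_bigr => j _; rewrite /U mulrDl.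
have eV : \sum_(j < r) \sum_(k < r | (j < k)%N) V s j k * (yv Z j * yv Z k) =
   Qpoly c2 (yv Z) - \sum_(j < r) \sum_(k < r | (j < k)%N) Va s j k * (yv Z j * yv Z k).
  rewrite /Qpoly -sumrB; apply: eq_bigr => j _; rewrite -sumrB; apply: eq_bigr => k _.
  by rewrite /V; ring.
have eW : \sum_S W s S * ind S Z = \sum_S Wa s S * ind S Z + \sum_S cH S * ind S Z.
  by rewrite -big_split /=; apply: eq_bigr => S _; rewrite /W mulrDl.
have mainE : main s Z = K0 s + \sum_(j < r) U s j * yv Z j
  + 2 * (\sum_(j < r) \sum_(k < r | (j < k)%N) V s j k * (yv Z j * yv Z k))
  + 4 * \sum_S W s S * ind S Z by [].
rewrite mainE eU eV eW e1 e2 e3 e4 eH; ring.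
Qed.

Lemma master s Z : (8 %| E s Z - main s Z)%Z.
Proof.
rewrite main_eq /E.
have -> : forall A B C D X : int, A + B + C + D - (X + B + C + D) = A - X.
  by move=> *; ring.
rewrite -sumrB; apply: rpred_sum => i _; rewrite -mulrBr; apply: dvdz_mull.
exact: bt_approx.
Qed.


Lemma sum_pairs (F : 'I_r -> 'I_r -> int) :
  \sum_(x < r) \sum_(y < r) F x y =
  \sum_(x < r) F x x + \sum_(x < r) \sum_(y < r | (x < y)%N) (F x y + F y x).
Proof.
have e : forall x : 'I_r, \sum_(y < r) F x y =
   F x x + \sum_(y < r | (x < y)%N) F x y + \sum_(y < r | (y < x)%N) F x y.
  move=> x; rewrite (bigD1 x) //= -addrA; congr (_ + _).
  rewrite (bigID (fun y : 'I_r => (x < y)%N)) /=; congr (_ + _).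
    apply: eq_bigl => y; have -> : (y != x) = (nat_of_ord y != nat_of_ord x) by [].
    lia.
  apply: eq_bigl => y; have -> : (y != x) = (nat_of_ord y != nat_of_ord x) by [].
  lia.
rewrite (eq_bigr _ (fun x _ => e x)) !big_split /= -addrA; congr (_ + _).
rewrite [X in _ + X](exchange_big_dep predT) //= -big_split /=.
by apply: eq_bigr => x _; rewrite -big_split.
Qed.

Lemma yv_sq Z j : yv Z j * yv Z j = yv Z j.
Proof. by rewrite /yv b2i_sq. Qed.

Definition MF (c : int) (u : 'I_r -> int) (v : 'I_r -> 'I_r -> int) Z : int :=
  c + \sum_(k < r) u k * yv Z k
    + \sum_(k < r) \sum_(l < r | (k < l)%N) v k l * (yv Z k * yv Z l).

Lemma prod_sums (f g : 'I_r -> int) Z :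
  (\sum_(x < r) f x * yv Z x) * (\sum_(y < r) g y * yv Z y) =
  \sum_(x < r) (f x * g x) * yv Z x
  + \sum_(x < r) \sum_(y < r | (x < y)%N) (f x * g y + f y * g x) * (yv Z x * yv Z y).
Proof.
rewrite mulr_suml (eq_bigr (fun x => \sum_(y < r) (f x * yv Z x) * (g y * yv Z y))); last first.
  by move=> x _; rewrite mulr_sumr.
rewrite sum_pairs; congr (_ + _).
  by apply: eq_bigr => x _; rewrite mulrACA yv_sq.
apply: eq_bigr => x _; apply: eq_bigr => y _; ring.
Qed.

Definition Good (phi : {set 'I_r} -> int) : Prop :=
  exists c u v, (forall Z, (8 %| phi Z - MF c u v Z)%Z) /\
     (forall k, (2 %| u k)%Z) /\ (forall k l, (4 %| v k l)%Z).

Lemma Good_ext phi psi : (forall Z, phi Z = psi Z) -> Good phi -> Good psi.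
Proof. by move=> e [c [u [v [h1 h2]]]]; exists c, u, v; split => // Z; rewrite -e. Qed.

Lemma Good_const t : Good (fun _ => t).
Proof.
exists t, (fun _ => 0), (fun _ _ => 0); split; last by split => *; apply: dvdz0.
move=> Z; rewrite /MF.
have -> : \sum_(k < r) 0 * yv Z k = 0 by rewrite big1 // => k _; rewrite mul0r.
have -> : \sum_(k < r) \sum_(l < r | (k < l)%N) 0 * (yv Z k * yv Z l) = 0.
  by rewrite big1 // => k _; rewrite big1 // => l _; rewrite mul0r.
by rewrite !addr0 subrr dvdz0.
Qed.

Lemma MF_add c u v c' u' v' Z :
  MF c u v Z + MF c' u' v' Z =
  MF (c + c') (fun k => u k + u' k) (fun k l => v k l + v' k l) Z.
Proof.
rewrite /MF.
have -> : \sum_(k < r) (u k + u' k) * yv Z k =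
   \sum_(k < r) u k * yv Z k + \sum_(k < r) u' k * yv Z k.
  by rewrite -big_split; apply: eq_bigr => *; rewrite mulrDl.
have -> : \sum_(k < r) \sum_(l < r | (k < l)%N) (v k l + v' k l) * (yv Z k * yv Z l) =
   \sum_(k < r) \sum_(l < r | (k < l)%N) v k l * (yv Z k * yv Z l) +
   \sum_(k < r) \sum_(l < r | (k < l)%N) v' k l * (yv Z k * yv Z l).
  rewrite -big_split; apply: eq_bigr => k _; rewrite -big_split; apply: eq_bigr => *.
  by rewrite mulrDl.
ring.
Qed.

Lemma MF_scale t c u v Z :
  t * MF c u v Z = MF (t * c) (fun k => t * u k) (fun k l => t * v k l) Z.
Proof.
rewrite /MF !mulrDr mulr_sumr; congr (_ + _ + _).
  by apply: eq_bigr => *; rewrite mulrA.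
rewrite mulr_sumr; apply: eq_bigr => k _; rewrite mulr_sumr; apply: eq_bigr => *.
by rewrite mulrA.
Qed.

Lemma Good_add phi psi : Good phi -> Good psi -> Good (fun Z => phi Z + psi Z).
Proof.
move=> [c [u [v [h1 [h2 h3]]]]] [c' [u' [v' [h1' [h2' h3']]]]].
exists (c + c'), (fun k => u k + u' k), (fun k l => v k l + v' k l); split.
  move=> Z; rewrite -MF_add.
  have -> : phi Z + psi Z - (MF c u v Z + MF c' u' v' Z) =
            (phi Z - MF c u v Z) + (psi Z - MF c' u' v' Z) by ring.
  by rewrite rpredD.
by split => *; rewrite rpredD.
Qed.

Lemma Good_scale t phi : Good phi -> Good (fun Z => t * phi Z).
Proof.
move=> [c [u [v [h1 [h2 h3]]]]].
exists (t * c), (fun k => t * u k), (fun k l => t * v k l); split.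
  by move=> Z; rewrite -MF_scale -mulrBr dvdz_mull.
by split => *; rewrite dvdz_mull.
Qed.

Lemma Good_sum (I : finType) (P : pred I) (phi : I -> {set 'I_r} -> int) :
  (forall x, P x -> Good (phi x)) -> Good (fun Z => \sum_(x | P x) phi x Z).
Proof.
move=> h; rewrite /index_enum; elim: (Finite.enum I) => [|x s IH].
  by apply: (Good_ext (phi := fun _ => 0)) => [Z|]; rewrite ?big_nil //; apply: Good_const.
case hx: (P x).
  apply: (Good_ext (phi := fun Z => phi x Z + \sum_(y <- s | P y) phi y Z)).
    by move=> Z; rewrite big_cons hx.
  by apply: Good_add => //; apply: h.
apply: (Good_ext (phi := fun Z => \sum_(y <- s | P y) phi y Z)) => //.
by move=> Z; rewrite big_cons hx.
Qed.

Lemma Good_bt j : Good (fun Z => 2 * bt j Z).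
Proof.
set be := b2i (b j).
exists (2 * be), (fun k => 2 * (1 - 2 * be) * b2i (a j k)),
  (fun k l => - 4 * (1 - 2 * be) * (b2i (a j k) * b2i (a j l))); split; last first.
  split => [k|k l]; apply/dvdzP.
    by exists ((1 - 2 * be) * b2i (a j k)); ring.
  by exists (- (1 - 2 * be) * (b2i (a j k) * b2i (a j l))); ring.
move=> Z.
have eu : \sum_(k < r) 2 * (1 - 2 * be) * b2i (a j k) * yv Z k =
          2 * (1 - 2 * be) * \sum_(k < r) zz j Z k.
  by rewrite mulr_sumr; apply: eq_bigr => k _; rewrite /zz mulrA.
have ev : \sum_(k < r) \sum_(l < r | (k < l)%N)
      - 4 * (1 - 2 * be) * (b2i (a j k) * b2i (a j l)) * (yv Z k * yv Z l) =
    - 4 * (1 - 2 * be) * Pp j Z.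
  rewrite /Pp mulr_sumr; apply: eq_bigr => k _; rewrite mulr_sumr; apply: eq_bigr => l _.
  by rewrite /zz; ring.
have hb := bt_approx j Z.
have -> : 2 * bt j Z - MF (2 * be) (fun k => 2 * (1 - 2 * be) * b2i (a j k))
     (fun k l => - 4 * (1 - 2 * be) * (b2i (a j k) * b2i (a j l))) Z =
   2 * (bt j Z - approx j Z) + 8 * ((1 - 2 * be) * T3 j Z).
  by rewrite /MF eu ev /approx -/be; ring.
by apply: rpredD; [apply: dvdz_mull | apply: dvdz_mulr; apply: dvdzz].
Qed.

Lemma bt_mod2 j Z : (2 %| bt j Z - (b2i (b j) + \sum_(x < r) zz j Z x))%Z.
Proof.
have h := bt_approx j Z.
have -> : bt j Z - (b2i (b j) + \sum_(x < r) zz j Z x) =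
   (bt j Z - approx j Z) + 2 * ((1 - 2 * b2i (b j)) * (- Pp j Z + 2 * T3 j Z)
        - b2i (b j) * \sum_(x < r) zz j Z x).
  by rewrite /approx; ring.
apply: rpredD; last by apply: dvdz_mulr.
by apply: dvdz_trans h; apply/dvdzP; exists 4.
Qed.

Lemma Good_bt2 j k : Good (fun Z => 4 * (bt j Z * bt k Z)).
Proof.
set bj := b2i (b j); set bk := b2i (b k).
set f := fun x => b2i (a j x); set g := fun x => b2i (a k x).
exists (4 * (bj * bk)), (fun x => 4 * (bj * g x + bk * f x + f x * g x)),
  (fun x y => 4 * (f x * g y + f y * g x)); split; last first.
  by split => *; apply: dvdz_mulr.
move=> Z.
have hMj : \sum_(x < r) zz j Z x = \sum_(x < r) f x * yv Z x by [].
have hMk : \sum_(x < r) zz k Z x = \sum_(x < r) g x * yv Z x by [].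
have hp := prod_sums f g Z.
have eu : \sum_(x < r) 4 * (bj * g x + bk * f x + f x * g x) * yv Z x =
   4 * bj * \sum_(x < r) g x * yv Z x + 4 * bk * \sum_(x < r) f x * yv Z x
   + 4 * \sum_(x < r) (f x * g x) * yv Z x.
  rewrite !mulr_sumr -!big_split /=; apply: eq_bigr => x _; ring.
have ev : \sum_(x < r) \sum_(y < r | (x < y)%N) 4 * (f x * g y + f y * g x) * (yv Z x * yv Z y) =
   4 * \sum_(x < r) \sum_(y < r | (x < y)%N) (f x * g y + f y * g x) * (yv Z x * yv Z y).
  rewrite mulr_sumr; apply: eq_bigr => x _; rewrite mulr_sumr; apply: eq_bigr => y _; ring.
have [ej hej] := dvdzP (bt_mod2 j Z).
have [ek hek] := dvdzP (bt_mod2 k Z).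
rewrite hMj in hej; rewrite hMk in hek.
move: hej hek; set Mj := \sum_(x < r) f x * yv Z x; set Mk := \sum_(x < r) g x * yv Z x.
move=> hej hek.
have -> : bt j Z = bj + Mj + ej * 2 by rewrite -hej; ring.
have -> : bt k Z = bk + Mk + ek * 2 by rewrite -hek; ring.
rewrite /MF eu ev.
move: hp; rewrite -/Mj -/Mk.
set A := \sum_(x < r) f x * g x * yv Z x.
set B := \sum_(x < r) \sum_(y < r | (x < y)%N) _.
move=> hp; have -> : A = Mj * Mk - B by rewrite hp; ring.
apply/dvdzP; exists (ej * (bk + Mk) + ek * (bj + Mj) + 2 * ej * ek); ring.
Qed.

Lemma UL_set (m : int) (kap : {set 'I_r} -> int) :
  (forall Z, (m %| \sum_T kap T * ind T Z)%Z) -> forall T, (m %| kap T)%Z.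
Proof.
move=> h.
suff H : forall N T, (#|T| < N)%N -> (m %| kap T)%Z by move=> T; apply: (H #|T|.+1).
elim=> [//|N IH] T hT.
have := h T; rewrite (bigD1 T) //= /ind subxx mulr1 => hs.
have hrest : (m %| \sum_(T' | T' != T) kap T' * b2i (T' \subset T))%Z.
  apply: rpred_sum => T' hne.
  case: (boolP (T' \subset T)) => hsub; rewrite /b2i /=; last by rewrite mulr0.
  rewrite mulr1; apply: IH.
  have : T' \proper T by rewrite properEneq hne.
  by move/proper_card => hc; apply: leq_trans hc _.
by rewrite -(rpredDr _ hrest).
Qed.

Lemma ord_eqE (x y : 'I_r) : (x == y) = (nat_of_ord x == nat_of_ord y).
Proof. by []. Qed.

Lemma pair_eq (j k j' k' : 'I_r) : (j < k)%N -> (j' < k')%N ->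
  ([set j; k] == [set j'; k']) = ((j == j') && (k == k')).
Proof.
move=> h1 h2; apply/eqP/andP => [h|[/eqP -> /eqP ->] //].
have hj : (j == j') || (j == k') by rewrite -in_set2 -h set21.
have hk : (k == j') || (k == k') by rewrite -in_set2 -h set22.
have hj' : (j' == j) || (j' == k) by rewrite -in_set2 h set21.
have hk' : (k' == j) || (k' == k) by rewrite -in_set2 h set22.
move: hj hk hj' hk'; rewrite !ord_eqE => hj hk hj' hk'.
split; lia.
Qed.

Lemma sum_pick (T0 : {set 'I_r}) (g : {set 'I_r} -> int) :
  \sum_T b2i (T == T0) * g T = g T0.
Proof.
rewrite (bigD1 T0) //= eqxx mul1r big1 ?addr0 // => T hT.
by rewrite (negbTE hT) mul0r.
Qed.

Lemma sum_pick_ord (j0 : 'I_r) (g : 'I_r -> int) :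
  \sum_(j < r) b2i (j == j0) * g j = g j0.
Proof.
rewrite (bigD1 j0) //= eqxx mul1r big1 ?addr0 // => j hj.
by rewrite (negbTE hj) mul0r.
Qed.

Lemma ind_set0 Z : ind set0 Z = 1.
Proof. by rewrite /ind sub0set. Qed.
Lemma ind_set1 j Z : ind [set j] Z = yv Z j.
Proof. by rewrite /ind sub1set. Qed.
Lemma ind_set2 j k Z : ind [set j; k] Z = yv Z j * yv Z k.
Proof. by rewrite /ind subUset !sub1set b2i_and. Qed.

Definition kapMF c u v (w : {set 'I_r} -> int) T : int :=
  b2i (T == set0) * c + \sum_(j < r) b2i (T == [set j]) * u j
  + \sum_(j < r) \sum_(k < r | (j < k)%N) b2i (T == [set j; k]) * v j k + w T.

Lemma kapMF_ev c u v w Z :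
  \sum_T kapMF c u v w T * ind T Z = MF c u v Z + \sum_T w T * ind T Z.
Proof.
rewrite /kapMF /MF.
rewrite (eq_bigr (fun T => b2i (T == set0) * (c * ind T Z)
   + \sum_(j < r) b2i (T == [set j]) * (u j * ind T Z)
   + \sum_(j < r) \sum_(k < r | (j < k)%N) b2i (T == [set j; k]) * (v j k * ind T Z)
   + w T * ind T Z)); last first.
  move=> T _; rewrite !mulrDl !mulr_suml; congr (_ + _ + _ + _).
  - by rewrite mulrA.
  - by apply: eq_bigr => *; rewrite mulrA.
  by apply: eq_bigr => j _; rewrite mulr_suml; apply: eq_bigr => *; rewrite mulrA.
rewrite !big_split /= sum_pick ind_set0 mulr1; congr (_ + _ + _ + _).
  rewrite exchange_big /=; apply: eq_bigr => j _.
  by rewrite (sum_pick [set j] (fun T => u j * ind T Z)) ind_set1.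
rewrite exchange_big /=; apply: eq_bigr => j _.
rewrite exchange_big /=; apply: eq_bigr => k _.
by rewrite (sum_pick [set j; k] (fun T => v j k * ind T Z)) ind_set2.
Qed.

Lemma card_neq (X Y : {set 'I_r}) : #|X| != #|Y| -> (X == Y) = false.
Proof. by move=> h; apply/negbTE; apply: contra h => /eqP ->. Qed.

Lemma cards2_lt (j k : 'I_r) : (j < k)%N -> #|[set j; k]| = 2%N.
Proof. by move=> h; rewrite cards2; have -> : (j != k) by rewrite ord_eqE; lia. Qed.

Lemma MF_unique (m : int) c u v (w : {set 'I_r} -> int) :
  (forall S, (#|S| <= 2)%N -> w S = 0) ->
  (forall Z, (m %| MF c u v Z + \sum_S w S * ind S Z)%Z) ->
  [/\ forall j, (m %| u j)%Z, forall j k : 'I_r, (j < k)%N -> (m %| v j k)%Z &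
      forall S, (m %| w S)%Z].
Proof.
move=> hw h.
have hk := UL_set (kap := kapMF c u v w) (fun Z => ecast X (m %| X)%Z (esym (kapMF_ev c u v w Z)) (h Z)).
split.
- move=> j; have := hk [set j]; rewrite /kapMF hw ?cards1 // addr0.
  rewrite card_neq ?cards1 ?cards0 // mul0r add0r.
  rewrite [X in _ + X]big1 ?addr0; last first.
    move=> j' _; rewrite big1 // => k' hjk.
    by rewrite card_neq ?mul0r // cards1 cards2_lt.
  rewrite (eq_bigr (fun j' => b2i (j' == j) * u j')) ?sum_pick_ord // => j' _.
  congr (b2i _ * _); apply/eqP/eqP => [/set1_inj -> // | -> //].
- move=> j k hjk; have := hk [set j; k]; rewrite /kapMF hw ?cards2_lt // addr0.
  rewrite card_neq ?cards2_lt ?cards0 // mul0r add0r.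
  rewrite big1 ?add0r; last first.
    by move=> j' _; rewrite card_neq ?mul0r // cards1 cards2_lt.
  rewrite (eq_bigr (fun j' => b2i (j' == j) *
        \sum_(k' < r) b2i (k' == k) * (if (j' < k')%N then v j' k' else 0))); last first.
    move=> j' _; rewrite mulr_sumr big_mkcond /=; apply: eq_bigr => k' _.
    case: ifP => hlt; last by rewrite !mulr0.
    by rewrite pair_eq // b2i_and (eq_sym j') (eq_sym k'); ring.
  by rewrite sum_pick_ord sum_pick_ord hjk.
- move=> S; case: (leqP #|S| 2) => hS; first by rewrite hw ?dvdz0.
  have := hk S; rewrite /kapMF.
  rewrite card_neq; last by rewrite cards0; lia.
  rewrite mul0r add0r big1; last first.
    by move=> j _; rewrite card_neq ?mul0r // cards1; lia.
  rewrite add0r big1 ?add0r // => j _; rewrite big1 // => k hjk.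
  by rewrite card_neq ?mul0r // cards2_lt //; lia.
Qed.

Lemma MF_sub c u v c' u' v' d Z :
  MF c u v Z - MF c' u' v' Z - d =
  MF (c - c' - d) (fun k => u k - u' k) (fun k l => v k l - v' k l) Z.
Proof.
rewrite /MF.
have -> : \sum_(k < r) (u k - u' k) * yv Z k =
   \sum_(k < r) u k * yv Z k - \sum_(k < r) u' k * yv Z k.
  by rewrite -sumrB; apply: eq_bigr => *; rewrite mulrBl.
have -> : \sum_(k < r) \sum_(l < r | (k < l)%N) (v k l - v' k l) * (yv Z k * yv Z l) =
   \sum_(k < r) \sum_(l < r | (k < l)%N) v k l * (yv Z k * yv Z l) -
   \sum_(k < r) \sum_(l < r | (k < l)%N) v' k l * (yv Z k * yv Z l).
  rewrite -sumrB; apply: eq_bigr => k _; rewrite -sumrB; apply: eq_bigr => *.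
  by rewrite mulrBl.
ring.
Qed.

Lemma main_MF s Z :
  main s Z = MF (K0 s) (U s) (fun j k => 2 * V s j k) Z + \sum_S (4 * W s S) * ind S Z.
Proof.
have mainE : main s Z = K0 s + \sum_(j < r) U s j * yv Z j
  + 2 * (\sum_(j < r) \sum_(k < r | (j < k)%N) V s j k * (yv Z j * yv Z k))
  + 4 * \sum_S W s S * ind S Z by [].
rewrite mainE /MF !mulr_sumr.
have -> : \sum_(i < r) 2 * \sum_(k < r | (i < k)%N) V s i k * (yv Z i * yv Z k) =
   \sum_(i < r) \sum_(k < r | (i < k)%N) 2 * V s i k * (yv Z i * yv Z k).
  by apply: eq_bigr => j _; rewrite mulr_sumr; apply: eq_bigr => *; rewrite mulrA.
have -> : \sum_S 4 * (W s S * ind S Z) = \sum_S 4 * W s S * ind S Z.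
  by apply: eq_bigr => *; rewrite mulrA.
ring.
Qed.

Lemma i_alpha (z : int) : 'i ^ z = alpha ^ (2 * z).
Proof.
rewrite -exprz_exp; congr (_ ^ _).
have -> : (2 : int) = Posz 2 by [].
by rewrite -alpha2.
Qed.

Lemma onlyif_core (s : 'I_n -> bool) (lam mu : algC) (F : {set 'I_n})
   (l : 'I_n -> int) (q : 'I_n -> 'I_n -> int) :
  lam != 0 -> mu != 0 ->
  (forall Z, lam * alpha ^ (E s Z) =
     mu * 'i ^ (\sum_(j in F) l j * bt j Z
                + 2 * \sum_(j in F) \sum_(k in F | (j < k)%N) q j k * bt j Z * bt k Z)) ->
  [/\ forall j, (2 %| U s j)%Z, forall j k : 'I_r, (j < k)%N -> (2 %| V s j k)%Z &
      forall S, (2 %| W s S)%Z].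
Proof.
move=> hl hm heq.
set psi := fun Z => \sum_(j in F) l j * bt j Z
                + 2 * \sum_(j in F) \sum_(k in F | (j < k)%N) q j k * bt j Z * bt k Z.
have hG : Good (fun Z => 2 * psi Z).
  apply: (Good_ext (phi := fun Z => \sum_(j in F) l j * (2 * bt j Z) +
     \sum_(j in F) \sum_(k in F | (j < k)%N) q j k * (4 * (bt j Z * bt k Z)))).
    move=> Z; rewrite /psi mulrDr mulr_sumr [2 * (2 * _)]mulrA [2 * _ * _]mulr_sumr.
    congr (_ + _); first by apply: eq_bigr => *; ring.
    apply: eq_bigr => j _; rewrite mulr_sumr; apply: eq_bigr => *; ring.
  apply: Good_add; apply: Good_sum => j _.
    by apply: Good_scale; apply: Good_bt.
  by apply: Good_sum => k _; apply: Good_scale; apply: Good_bt2.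
have [c' [u' [v' [h1 [h2 h3]]]]] := hG.
have hD : forall Z, alpha ^ (E s Z - 2 * psi Z) = mu / lam.
  move=> Z; rewrite expfzDr ?alpha_neq0 // -invr_expz -i_alpha.
  have := heq Z; rewrite -/(psi Z) => e.
  apply: (mulfI hl); rewrite mulrA e -mulrA mulfV ?mulr1 ?expfz_neq0 ?neq0Ci //.
  by rewrite [RHS]mulrC divfK.
have h8 : forall Z, (8 %| (E s Z - 2 * psi Z) - (E s set0 - 2 * psi set0))%Z.
  move=> Z; apply: alpha_eq1; rewrite expfzDr ?alpha_neq0 // -invr_expz !hD mulfV //.
  by rewrite mulf_neq0 ?invr_eq0.
set d := E s set0 - 2 * psi set0.
have hall : forall Z, (8 %| MF (K0 s - c' - d) (fun k => U s k - u' k)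
      (fun k l => 2 * V s k l - v' k l) Z + \sum_S (4 * W s S) * ind S Z)%Z.
  move=> Z; rewrite -MF_sub.
  have e : MF (K0 s) (U s) (fun j k => 2 * V s j k) Z - MF c' u' v' Z - d +
      \sum_S 4 * W s S * ind S Z =
      (E s Z - 2 * psi Z - d) - (E s Z - main s Z) + (2 * psi Z - MF c' u' v' Z).
    by rewrite main_MF; ring.
  rewrite e; apply: rpredD; [apply: rpredB; [exact: h8 | exact: master] | exact: h1].
have hw : forall S, (#|S| <= 2)%N -> 4 * W s S = 0.
  move=> S hS; rewrite /W /Wa /cH.
  have -> : (#|S| == 3%N) = false by apply/negbTE; lia.
  have -> : (3 <= #|S|)%N = false by apply/negbTE; lia.
  by rewrite addr0 mulr0.
have [hu hv hW] := MF_unique hw hall.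
split.
- by move=> j; have := hu j; have := h2 j; lia.
- by move=> j k hjk; have := hv j k hjk; have := h3 j k; lia.
- by move=> S; have := hW S; lia.
Qed.

Hypothesis ha : forall j k : 'I_r, a (widen_ord hr j) k = (j == k).
Hypothesis hb : forall j : 'I_r, b (widen_ord hr j) = false.

Lemma xv_free Z j : xv Z (widen_ord hr j) = (j \in Z).
Proof.
rewrite /xv ffunE hb addbF (eq_bigr (fun k => k == j)); last by move=> k _; rewrite ha eq_sym.
case: (boolP (j \in Z)) => h.
  rewrite (bigD1 j) //= eqxx big1 // => k /andP [_ hk]; exact: negbTE.
by rewrite big1 // => k hk; apply/negbTE; apply: contraNneq h => <-.
Qed.

Lemma freevals_xv Z : freevals hr (xv Z) = yv Z.
Proof.
by apply: FunctionalExtensionality.functional_extensionality => j; rewrite /freevals xv_free.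
Qed.

Lemma xsum_Z (x : bvec n) i :
  xsum predT (fun j => a i j && x (widen_ord hr j)) =
  \big[addb/false]_(j in [set j | x (widen_ord hr j)]) a i j.
Proof.
rewrite /xsum big_mkcond [RHS]big_mkcond /=; apply: eq_bigr => j _.
by rewrite inE; case: (x _); case: (a i j).
Qed.

Lemma in_aff_xv Z : in_aff hr a b (xv Z).
Proof.
apply/forallP => i; rewrite xsum_Z.
have -> : [set j | xv Z (widen_ord hr j)] = Z by apply/setP => j; rewrite inE xv_free.
by rewrite /xv ffunE.
Qed.

Lemma in_aff_eq (x : bvec n) : in_aff hr a b x -> x = xv [set j | x (widen_ord hr j)].
Proof.
move/forallP => h; apply/ffunP => i; rewrite /xv ffunE -xsum_Z.
exact: (eqP (h i)).
Qed.

Lemma alpha_mod (u v : int) : (8 %| u - v)%Z -> alpha ^ u = alpha ^ v.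
Proof.
case/dvdzP => k hk.
have -> : u = v + 8 * k by rewrite mulrC -hk; ring.
by rewrite expfzDr ?alpha_neq0 // alphaz8 mulr1.
Qed.

Lemma if_core s :
  (forall j, (2 %| U s j)%Z) -> (forall j k : 'I_r, (j < k)%N -> (2 %| V s j k)%Z) ->
  (forall S, (2 %| W s S)%Z) ->
  forall Z, alpha ^ (E s Z) = alpha ^ (K0 s) *
    'i ^ (\sum_(j < r) (U s j %/ 2)%Z * yv Z j
          + 2 * \sum_(j < r) \sum_(k < r | (j < k)%N) (V s j k %/ 2)%Z * yv Z j * yv Z k).
Proof.
move=> hU hV hW Z.
rewrite (alpha_mod (master s Z)) i_alpha -expfzDr ?alpha_neq0 //.
apply: alpha_mod.
have mainE : main s Z = K0 s + \sum_(j < r) U s j * yv Z j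
  + 2 * (\sum_(j < r) \sum_(k < r | (j < k)%N) V s j k * (yv Z j * yv Z k))
  + 4 * \sum_S W s S * ind S Z by [].
have eU : \sum_(j < r) U s j * yv Z j = 2 * \sum_(j < r) (U s j %/ 2)%Z * yv Z j.
  rewrite mulr_sumr; apply: eq_bigr => j _; rewrite mulrA [2 * _]mulrC divzK //.
have eV : \sum_(j < r) \sum_(k < r | (j < k)%N) V s j k * (yv Z j * yv Z k) =
   2 * \sum_(j < r) \sum_(k < r | (j < k)%N) (V s j k %/ 2)%Z * yv Z j * yv Z k.
  rewrite mulr_sumr; apply: eq_bigr => j _; rewrite mulr_sumr; apply: eq_bigr => k hjk.
  by rewrite -{1}(divzK (hV j k hjk)); ring.
have eW : \sum_S W s S * ind S Z = 2 * \sum_S (W s S %/ 2)%Z * ind S Z.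
  by rewrite mulr_sumr; apply: eq_bigr => S _; rewrite mulrA [2 * _]mulrC divzK.
rewrite mainE eU eV eW.
apply/dvdzP; exists (\sum_S (W s S %/ 2)%Z * ind S Z); ring.
Qed.

Definition NP (s : 'I_n -> bool) S : nat := (\sum_(i < n) (s i : nat) * (S \subset As i : nat))%N.
Definition Nn S : nat := (\sum_(i < n) (S \subset As i : nat))%N.

Lemma andb_addl' (x y c : bool) : (x (+) y) && c = (x && c) (+) (y && c).
Proof. by case: x; case: y; case: c. Qed.

Lemma odd_NP s S : odd (NP s S) = \big[addb/false]_(i < n) (s i && (S \subset As i)).
Proof.
rewrite /NP (big_morph odd oddD (erefl (odd 0))) /=.
by apply: eq_bigr => i _; rewrite oddM !oddb.
Qed.

Lemma odd_Nn S : odd (Nn S) = \big[addb/false]_(i < n) (S \subset As i).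
Proof.
rewrite /Nn (big_morph odd oddD (erefl (odd 0))) /=.
by apply: eq_bigr => i _; rewrite oddb.
Qed.

Lemma GL T S : odd (NP (xv T) S) =
  odd (NP b S) (+) \big[addb/false]_(k in T) odd (Nn (k |: S)).
Proof.
rewrite !odd_NP (eq_bigr (fun i => \big[addb/false]_(k in T) (a i k && (S \subset As i))
     (+) (b i && (S \subset As i)))); last first.
  move=> i _; rewrite /xv ffunE andb_addl'; congr (_ (+) _).
  by rewrite (big_morph (fun x => x && (S \subset As i)) (fun x y => andb_addl' x y _) (erefl (false && _))).
rewrite big_split /= addbC; congr (_ (+) _).
rewrite exchange_big /=; apply: eq_bigr => k _; rewrite odd_Nn; apply: eq_bigr => i _.
by rewrite subUset sub1set inE.
Qed.

Lemma xv0 : forall i, xv set0 i = b i.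
Proof. by move=> i; rewrite /xv ffunE big_set0. Qed.

Lemma NP_b S : NP (xv set0) S = NP b S.
Proof. by rewrite /NP; apply: eq_bigr => i _; rewrite xv0. Qed.

Lemma cb_sum s S : \sum_(i < n) cb s i * b2i (S \subset As i) =
  (NP s S)%:Z - 2 * \sum_(i < n) b2i (s i) * b2i (b i) * b2i (S \subset As i).
Proof.
rewrite /NP (big_morph Posz PoszD (erefl _)) mulr_sumr -sumrB.
by apply: eq_bigr => i _; rewrite PoszM /cb /b2i; ring.
Qed.

Lemma par_U s j : (2 %| U s j)%Z = (2 %| (NP s [set j])%:Z + c1 j)%Z.
Proof.
have e : \sum_(i < n) cb s i * b2i (a i j) = \sum_(i < n) cb s i * b2i ([set j] \subset As i).
  by apply: eq_bigr => i _; rewrite sub1set inE.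
rewrite /U /Ua e cb_sum; apply/idP/idP; lia.
Qed.

Lemma par_V s j k : (2 %| V s j k)%Z = (2 %| (NP s [set j; k])%:Z + c2 j k)%Z.
Proof.
have e : Va s j k = \sum_(i < n) cb s i * b2i ([set j; k] \subset As i).
  by apply: eq_bigr => i _; rewrite subUset !sub1set !inE b2i_and.
rewrite /V e cb_sum; apply/idP/idP; lia.
Qed.

Lemma par_W3 s S : #|S| = 3%N -> (2 %| W s S)%Z = (2 %| (NP s S)%:Z + cS S)%Z.
Proof.
move=> h; rewrite /W /Wa /cH h /= cb_sum; apply/idP/idP; lia.
Qed.

Lemma par_W4 s S : (4 <= #|S|)%N -> W s S = cS S.
Proof.
move=> h; rewrite /W /Wa /cH.
have -> : (#|S| == 3%N) = false by apply/negbTE; lia.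
have -> : (3 <= #|S|)%N by lia.
by rewrite add0r.
Qed.

Lemma par_W2 s S : (#|S| <= 2)%N -> W s S = 0.
Proof.
move=> h; rewrite /W /Wa /cH.
have -> : (#|S| == 3%N) = false by apply/negbTE; lia.
have -> : (3 <= #|S|)%N = false by apply/negbTE; lia.
by rewrite add0r.
Qed.

Lemma prod_nat_sub i S : (\prod_(j in S) (a i j : nat))%N = (S \subset As i : nat).
Proof.
case: (boolP (S \subset As i)) => h /=.
  by rewrite big1 // => j jS; move: (subsetP h j jS); rewrite inE => ->.
have [j jS jA] := subsetPn h; move: jA; rewrite inE => /negbTE jA.
by rewrite (bigD1 j) //= jA.
Qed.

Lemma odd_eq (X Y : nat) (c : int) :
  (2 %| X%:Z + c)%Z -> (2 %| Y%:Z + c)%Z -> odd X = odd Y.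
Proof.
move=> h1 h2; have : (2 %| X + Y)%N by lia.
by rewrite dvdn2 oddD; case: (odd X); case: (odd Y).
Qed.

Lemma odd_transfer (X Y : nat) (c : int) :
  odd X = odd Y -> (2 %| Y%:Z + c)%Z -> (2 %| X%:Z + c)%Z.
Proof.
move=> e h; have : (2 %| X + Y)%N by rewrite dvdn2 oddD e; case: (odd Y).
lia.
Qed.

Lemma Q1 : (forall S', (1 <= #|S'| <= 4)%N -> ~~ odd (Nn S')) ->
  forall T S, (1 <= #|S| <= 3)%N -> odd (NP (xv T) S) = odd (NP b S).
Proof.
move=> h T S hS; rewrite GL big1 ?addbF // => k _; apply/negbTE; apply: h.
rewrite cardsU1; case: (k \in S) => /=; move: hS; set m := #|S|; lia.
Qed.

Lemma Q2 S (c : int) : (forall T, (2 %| (NP (xv T) S)%:Z + c)%Z) ->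
  (2 %| (NP b S)%:Z + c)%Z /\ forall k, ~~ odd (Nn (k |: S)).
Proof.
move=> h; split; first by rewrite -NP_b.
move=> k; have := odd_eq (h [set k]) (h set0).
by rewrite GL big_set1 NP_b; case: (odd (NP b S)); case: (odd (Nn _)).
Qed.

Definition Par T := [/\ forall j, (2 %| U (xv T) j)%Z,
   forall j k : 'I_r, (j < k)%N -> (2 %| V (xv T) j k)%Z &
   forall S, (2 %| W (xv T) S)%Z].

Lemma Q3 S : (1 <= #|S| <= 3)%N -> exists c : int,
  forall T, Par T -> (2 %| (NP (xv T) S)%:Z + c)%Z.
Proof.
move=> hS.
have [h1|h1] := eqVneq #|S| 1%N.
  have [j ->] : exists j, S = [set j] by apply/cards1P; apply/eqP.
  by exists (c1 j) => T [hU _ _]; rewrite -par_U.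
have [h2|h2] := eqVneq #|S| 2%N.
  have /cards2P [x [y [hxy ->]]] : #|S| == 2%N by rewrite h2.
  have [hlt|hlt] := ltnP x y.
    by exists (c2 x y) => T [_ hV _]; rewrite -par_V hV.
  have hlt' : (y < x)%N by move: hxy; rewrite ord_eqE; lia.
  exists (c2 y x) => T [_ hV _]; rewrite setUC -par_V hV //.
have h3 : #|S| = 3%N by lia.
by exists (cS S) => T [_ _ hW]; rewrite -par_W3.
Qed.

Lemma Q4 : (forall T, Par T) -> forall S', (1 <= #|S'| <= 4)%N -> ~~ odd (Nn S').
Proof.
move=> hP S' hS'.
have [k kS] : exists k, k \in S' by apply/set0Pn; rewrite -card_gt0; lia.
have hc := cardsD1 k S'; rewrite kS /= in hc.
pose S := if #|S'| == 1%N then S' else S' :\ k.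
have eS : k |: S = S'.
  rewrite /S; case: ifP => _; last by rewrite setD1K.
  by apply/setP => x; rewrite !inE; case: eqP => // ->; rewrite kS.
have hS : (1 <= #|S| <= 3)%N.
  rewrite /S; case: ifP => /eqP h1; move: hS' hc h1; set m := #|S'|; set m' := #|S' :\ k|; lia.
have [c hc'] := Q3 hS.
have [_ ] := Q2 (fun T => hc' T (hP T)).
by move=> /(_ k); rewrite eS.
Qed.

Lemma modeq2 (x c : int) : (x = c %[mod 2])%Z <-> (2 %| x + c)%Z.
Proof.
split => [h|h].
  have : (x == c %[mod 2])%Z by apply/eqP.
  by rewrite eqz_mod_dvd; lia.
by apply/eqP; rewrite eqz_mod_dvd; lia.
Qed.

Lemma Nn_eq S : (\sum_(i < n) \prod_(j in S) (a i j : nat))%N = Nn S.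
Proof. by apply: eq_bigr => i _; rewrite prod_nat_sub. Qed.

Lemma NPb1 j : (\sum_(i < n) (a i j : nat) * (b i : nat))%N = NP b [set j].
Proof. by apply: eq_bigr => i _; rewrite sub1set inE mulnC. Qed.

Lemma NPb2 j k : (\sum_(i < n) (a i j : nat) * (a i k : nat) * (b i : nat))%N = NP b [set j; k].
Proof.
apply: eq_bigr => i _; rewrite subUset !sub1set !inE mulnC.
by case: (a i j); case: (a i k).
Qed.

Lemma NPb3 S : (\sum_(i < n) (\prod_(j in S) (a i j : nat)) * (b i : nat))%N = NP b S.
Proof. by apply: eq_bigr => i _; rewrite prod_nat_sub mulnC. Qed.

Lemma CP : (forall T, Par T) <->
  [/\ (forall S : {set 'I_r}, (4 <= #|S|)%N -> (2 %| cS S)%Z),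
      (forall S : {set 'I_r}, (1 <= #|S| <= 4)%N ->
          ~~ odd (\sum_(i < n) \prod_(j in S) (a i j : nat))%N),
      (forall j : 'I_r,
          ((\sum_(i < n) (a i j : nat) * (b i : nat))%N%:Z = c1 j %[mod 2])%Z),
      (forall j k : 'I_r, (j < k)%N ->
          ((\sum_(i < n) (a i j : nat) * (a i k : nat) * (b i : nat))%N%:Z
             = c2 j k %[mod 2])%Z) &
      (forall S : {set 'I_r}, #|S| = 3%N ->
          ((\sum_(i < n) (\prod_(j in S) (a i j : nat)) * (b i : nat))%N%:Z
             = cS S %[mod 2])%Z)].
Proof.
split.
  move=> hP; have [hU hV hW] := hP set0.
  split.
  - by move=> S hS; rewrite -(par_W4 (xv set0) hS).
  - by move=> S hS; rewrite Nn_eq; apply: Q4.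
  - by move=> j; rewrite NPb1 modeq2 -NP_b -par_U.
  - by move=> j k hjk; rewrite NPb2 modeq2 -NP_b -par_V hV.
  - by move=> S hS; rewrite NPb3 modeq2 -NP_b -par_W3.
move=> [h1 h2 h3 h4 h5].
have hq : forall S', (1 <= #|S'| <= 4)%N -> ~~ odd (Nn S').
  by move=> S' hS'; rewrite -Nn_eq; apply: h2.
move=> T; split.
- move=> j; rewrite par_U; apply: (odd_transfer (Q1 hq T _)); first by rewrite cards1.
  by rewrite -NPb1; apply/modeq2.
- move=> j k hjk; rewrite par_V; apply: (odd_transfer (Q1 hq T _)); first by rewrite cards2_lt.
  by rewrite -NPb2; apply/modeq2; apply: h4.
- move=> S; case: (leqP #|S| 2) => hS2; first by rewrite par_W2 ?dvdz0.
  case: (leqP 4 #|S|) => hS4; first by rewrite par_W4 // h1.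
  have hS3 : #|S| = 3%N by lia.
  rewrite par_W3 //; apply: (odd_transfer (Q1 hq T _)); first by rewrite hS3.
  by rewrite -NPb3; apply/modeq2; apply: h5.
Qed.

Lemma widen_inj : injective (widen_ord hr).
Proof. by move=> x y /(congr1 val) /= /val_inj. Qed.

Definition Fw : {set 'I_n} := [set widen_ord hr j | j : 'I_r].

Lemma big_Fw (R : Type) (idx : R) (op : Monoid.com_law idx) (G : 'I_n -> R) :
  \big[op/idx]_(j' in Fw) G j' = \big[op/idx]_(j < r) G (widen_ord hr j).
Proof.
rewrite /Fw big_imset /=; last by move=> x y _ _; apply: widen_inj.
by apply: eq_bigl => j; rewrite inE.
Qed.

Lemma sum_widen_pick (h : 'I_r -> int) (j : 'I_r) :
  \sum_(j0 < r | widen_ord hr j0 == widen_ord hr j) h j0 = h j.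
Proof.
by rewrite (big_pred1 j) // => j0; rewrite /= (inj_eq widen_inj).
Qed.

Section Thm.
Variables (lam : algC) (hlam : lam != 0) (f : bvec n -> algC).
Hypothesis hf : forall x : bvec n, f x =
     if in_aff hr a b x then
       lam * alpha ^ (Lpoly c1 (freevals hr x) + 2 * Qpoly c2 (freevals hr x)
                      + 4 * Hpoly cS (freevals hr x))
     else 0.

Definition gg (s : bvec n) := fun x : bvec n =>
  alpha ^ (\sum_(i < n) b2i (s i) * b2i (x i)) * f x.

Lemma gg_xv (s : bvec n) Z : gg s (xv Z) = lam * alpha ^ (E s Z).
Proof.
rewrite /gg hf in_aff_xv freevals_xv mulrCA -expfzDr ?alpha_neq0 //.
by rewrite /E !addrA.
Qed.

Lemma gg_ne0 (s x : bvec n) : (gg s x != 0) = in_aff hr a b x.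
Proof.
rewrite /gg hf; case: (in_aff _ _ _ _) => /=; last by rewrite mulr0 eqxx.
by rewrite !mulf_neq0 // expfz_neq0 // alpha_neq0.
Qed.

Lemma main_thm : classL f <-> (forall T, Par T).
Proof.
split.
  move=> hL T.
  have hs : f (xv T) != 0.
    by rewrite hf in_aff_xv mulf_neq0 // expfz_neq0 // alpha_neq0.
  case: (hL _ hs) => [h0 | [F [A' [B' [_ [mu [l [q [hmu hform]]]]]]]]].
    by move: (gg_ne0 (xv T) (xv T)); rewrite in_aff_xv /gg h0 eqxx.
  apply: (onlyif_core hlam hmu) => Z.
  rewrite -gg_xv; apply: hform.
  by rewrite gg_ne0 in_aff_xv.
move=> hP s hs.
have haff : in_aff hr a b s by rewrite -(gg_ne0 s s) /gg mulf_neq0 // expfz_neq0 // alpha_neq0.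
set T := [set j | s (widen_ord hr j)].
have es : s = xv T := in_aff_eq haff.
have [hU hV hW] := hP T.
right; exists Fw, (fun i j' => [exists j : 'I_r, (widen_ord hr j == j') && a i j]), b.
split.
  split.
  - move=> i j' /imsetP [i0 _ ->] /imsetP [j0 _ ->].
    rewrite (inj_eq widen_inj) -ha; apply/existsP/idP => [[j /andP [/eqP e h]]|h].
      by move: e => /widen_inj <-.
    by exists j0; rewrite eqxx.
  - by move=> i /imsetP [i0 _ ->]; rewrite hb.
  - move=> x; rewrite /= gg_ne0; split.
      move/forallP => h i; rewrite (eqP (h i)); congr (_ (+) _).
      rewrite /xsum big_Fw; apply: eq_bigr => j _; congr (_ && _).
      apply/idP/existsP => [h'|[j0 /andP [/eqP /widen_inj -> //]]].
      by exists j; rewrite eqxx.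
    move=> h; apply/forallP => i; rewrite {1}h; apply/eqP; congr (_ (+) _).
    rewrite /xsum big_Fw; apply: eq_bigr => j _; congr (_ && _).
    apply/existsP/idP => [[j0 /andP [/eqP /widen_inj -> //]]|h'].
    by exists j; rewrite eqxx.
exists (lam * alpha ^ (K0 s)),
  (fun j' => \sum_(j0 < r | widen_ord hr j0 == j') (U s j0 %/ 2)%Z),
  (fun j' k' => \sum_(j0 < r | widen_ord hr j0 == j')
                 \sum_(k0 < r | widen_ord hr k0 == k') (V s j0 k0 %/ 2)%Z).
split; first by rewrite mulf_neq0 // expfz_neq0 // alpha_neq0.
move=> x hx; rewrite gg_ne0 in hx.
rewrite (in_aff_eq hx); set Z := [set j | x (widen_ord hr j)].
rewrite -/(gg s (xv Z)) gg_xv es (if_core hU hV hW) mulrA; congr (_ * 'i ^ (_ + 2 * _)).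
  rewrite /= big_Fw; apply: eq_bigr => j _.
  by rewrite sum_widen_pick xv_free.
rewrite /= big_Fw; apply: eq_bigr => j _.
rewrite big_mkcondr /= big_Fw [LHS]big_mkcond /=; apply: eq_bigr => k _.
case: (j < k)%N => //.
rewrite (eq_bigr (fun j0 => (V (xv T) j0 k %/ 2)%Z)); last first.
  by move=> j0 _; rewrite sum_widen_pick.
by rewrite sum_widen_pick !xv_free.
Qed.

End Thm.
End Main.

Unset Implicit Arguments.

Theorem theorem3p4 (n r : nat) (hr : (r <= n)%N)
  (a : 'I_n -> 'I_r -> bool) (b : 'I_n -> bool)
  (ha : forall j k : 'I_r, a (widen_ord hr j) k = (j == k))
  (hb : forall j : 'I_r, b (widen_ord hr j) = false)
  (lam : algC) (hlam : lam != 0)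
  (c1 : 'I_r -> int) (c2 : 'I_r -> 'I_r -> int) (cS : {set 'I_r} -> int)
  (f : bvec n -> algC)
  (hf : forall x : bvec n, f x =
     if in_aff hr a b x then
       lam * alpha ^ (Lpoly c1 (freevals hr x) + 2 * Qpoly c2 (freevals hr x)
                      + 4 * Hpoly cS (freevals hr x))
     else 0) :
  classL f <->
  [/\ (forall S : {set 'I_r}, (4 <= #|S|)%N -> (2 %| cS S)%Z),
      (forall S : {set 'I_r}, (1 <= #|S| <= 4)%N ->
          ~~ odd (\sum_(i < n) \prod_(j in S) (a i j : nat))%N),
      (forall j : 'I_r,
          ((\sum_(i < n) (a i j : nat) * (b i : nat))%N%:Z = c1 j %[mod 2])%Z),
      (forall j k : 'I_r, (j < k)%N ->
          ((\sum_(i < n) (a i j : nat) * (a i k : nat) * (b i : nat))%N%:Z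
             = c2 j k %[mod 2])%Z) &
      (forall S : {set 'I_r}, #|S| = 3%N ->
          ((\sum_(i < n) (\prod_(j in S) (a i j : nat)) * (b i : nat))%N%:Z
             = cS S %[mod 2])%Z)].
Proof.
have H := main_thm ha hb hlam hf.
have H2 := CP hr a b c1 c2 cS.
Time apply: (iff_trans H).
Time exact: H2.
Qed.
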